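(* Let $\hat\mu\in\operatorname{conv}\{g_1,\dots,g_N\}$ and consider the MW–MMW rounds for the fixed center $\hat\mu$ with $w^{(1)}$ having positive entries and $0<\eta_\rho\nu\le1/2$, $0<\eta_w\nu\le 1/2$. Then for every $w\in\Delta_{N,\epsilon}$ and every $\rho\in\mathfrak D_p$, $$\sum_{t=1}^T\langle S^{(t)},\rho\rangle\le(1+\eta_\rho\nu)(1+\eta_w\nu)\sum_{t=1}^T\langle m^{(t)},w\rangle+\frac{(1+\eta_\rho\nu)\,\mathrm{RE}(w\|w^{(1)})}{\eta_w}+\frac{\log p}{\eta_\rho}.$$ In particular, for the uniform initialization $w^{(1)}=(1/N,\dots,1/N)$, $$\sum_{t=1}^T\langle S^{(t)},\rho\rangle\le(1+\eta_\rho\nu)(1+\eta_w\nu)\sum_{t=1}^T\langle m^{(t)},w\rangle+\frac{(1+\eta_\rho\nu)\log\frac{1}{1-\epsilon}}{\eta_w}+\frac{\log p}{\eta_\rho}.$$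
   Context: Fix integers $N\ge1$, $p\ge1$, $\epsilon\in[0,1)$ and vectors $g_1,\dots,g_N\in\mathbb R^p$. The capped simplex is $\Delta_{N,\epsilon}=\{w\in\mathbb R^N:\sum_n w_n=1,\ 0\le w_n\le \frac{1}{(1-\epsilon)N}\}$; density matrices $\mathfrak D_p=\{\rho\in\mathbb R^{p\times p}:\rho=\rho^\top\succeq0,\mathrm{Tr}\,\rho=1\}$; $\langle A,B\rangle=\mathrm{Tr}(A^\top B)$; $\nu=\max_{i,j}\|g_i-g_j\|_2^2$. Relative entropy: $\mathrm{RE}(w\|v)=\sum_n w_n\log(w_n/v_n)$ (with $0\log0=0$). MW–MMW rounds for a fixed center $\hat\mu\in\mathbb R^p$: let $z_n=g_n-\hat\mu$, initial weights $w^{(1)}\in\Delta_{N,\epsilon}$, step sizes $\eta_w,\eta_\rho>0$, and $T\ge1$. For $t=1,\dots,T$: $S^{(t)}=\sum_n w^{(t)}_n z_nz_n^\top$; $\rho^{(t)}=\exp(\eta_\rho\sum_{t'=1}^t S^{(t')})/\mathrm{Tr}\exp(\eta_\rho\sum_{t'=1}^tS^{(t')})$; loss vector $m^{(t)}_n=z_n^\top\rho^{(t)}z_n$; $\tilde w^{(t)}_n=w^{(t)}_n(1-\eta_w m^{(t)}_n)$; $w^{(t+1)}=\arg\min_{w\in\Delta_{N,\epsilon}}\mathrm{RE}(w\|\tilde w^{(t)})$. *)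

(* Defs.v *)
From HB Require Import structures.
From mathcomp Require Import all_boot all_order all_algebra.
From mathcomp Require Import all_classical all_reals all_analysis.
Set Implicit Arguments. Unset Strict Implicit. Unset Printing Implicit Defensive.
Import Order.TTheory GRing.Theory Num.Theory numFieldNormedType.Exports.
Local Open Scope ring_scope.

Section MWMMW.
Variable R : realType.

Definition mexp (p : nat) (A : 'M[R]_p) : 'M[R]_p :=
  \matrix_(i, j) limn (series (fun k : nat => (A ^+ k) i j / (k`!)%:R)).

Definition frob (p : nat) (A B : 'M[R]_p) : R := \tr (A^T *m B).

Definition sqnorm (p : nat) (x : 'cV[R]_p) : R := (x^T *m x) 0 0.

(* nu = max_{i,j} ||g_i - g_j||^2 (all terms are >= 0, so 0 is a neutral base). *)
Definition nu (N p : nat) (g : 'I_N -> 'cV[R]_p) : R :=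
  \big[Num.max/0]_(i < N) \big[Num.max/0]_(j < N) sqnorm (g i - g j).

Definition capped_simplex (N : nat) (eps : R) (w : 'I_N -> R) : Prop :=
  \sum_(n < N) w n = 1 /\
  forall n, 0 <= w n /\ w n <= ((1 - eps) * N%:R)^-1.

Definition density (p : nat) (rho : 'M[R]_p) : Prop :=
  rho^T = rho /\ (forall x : 'cV[R]_p, 0 <= (x^T *m rho *m x) 0 0) /\ \tr rho = 1.

Definition RE (N : nat) (w v : 'I_N -> R) : R :=
  \sum_(n < N) (if w n == 0 then 0 else w n * ln (w n / v n)).

Definition in_conv (N p : nat) (g : 'I_N -> 'cV[R]_p) (mu : 'cV[R]_p) : Prop :=
  exists lam : 'I_N -> R, (forall n, 0 <= lam n) /\ \sum_(n < N) lam n = 1 /\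
    mu = \sum_(n < N) lam n *: g n.

(* Ingredients of the MW-MMW rounds, given the weight sequence w : nat -> weights
   (w t is w^{(t)}, rounds are numbered from 1). *)
Definition zvec (N p : nat) (g : 'I_N -> 'cV[R]_p) (mu : 'cV[R]_p) (n : 'I_N) :=
  g n - mu.

Definition Smat (N p : nat) (g : 'I_N -> 'cV[R]_p) (mu : 'cV[R]_p)
  (w : 'I_N -> R) : 'M[R]_p :=
  \sum_(n < N) w n *: (zvec g mu n *m (zvec g mu n)^T).

Definition rhomat (N p : nat) (g : 'I_N -> 'cV[R]_p) (mu : 'cV[R]_p)
  (eta_rho : R) (w : nat -> 'I_N -> R) (t : nat) : 'M[R]_p :=
  let E := mexp (eta_rho *: \sum_(1 <= t' < t.+1) Smat g mu (w t')) in
  (\tr E)^-1 *: E.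

Definition lossvec (N p : nat) (g : 'I_N -> 'cV[R]_p) (mu : 'cV[R]_p)
  (eta_rho : R) (w : nat -> 'I_N -> R) (t : nat) (n : 'I_N) : R :=
  ((zvec g mu n)^T *m rhomat g mu eta_rho w t *m zvec g mu n) 0 0.

Definition wtilde (N p : nat) (g : 'I_N -> 'cV[R]_p) (mu : 'cV[R]_p)
  (eta_rho eta_w : R) (w : nat -> 'I_N -> R) (t : nat) (n : 'I_N) : R :=
  w t n * (1 - eta_w * lossvec g mu eta_rho w t n).

Definition is_RE_proj (N : nat) (eps : R) (v w' : 'I_N -> R) : Prop :=
  capped_simplex eps w' /\
  forall u, capped_simplex eps u -> RE w' v <= RE u v.

Definition mwmmw_run (N p : nat) (g : 'I_N -> 'cV[R]_p) (mu : 'cV[R]_p)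
  (eps eta_rho eta_w : R) (T : nat) (w : nat -> 'I_N -> R) : Prop :=
  forall t, (1 <= t <= T)%N ->
    is_RE_proj eps (wtilde g mu eta_rho eta_w w t) (w t.+1).

End MWMMW.

(* Main.v *)
Require Import Defs.
From HB Require Import structures.
From mathcomp Require Import all_boot all_order all_algebra.
From mathcomp Require Import all_classical all_reals all_analysis.
From mathcomp Require Import complex.
From mathcomp Require Import ring lra.
Import Order.TTheory GRing.Theory Num.Theory.
Import numFieldNormedType.Exports.
Local Open Scope ring_scope.

Section RS.
Variable R : realType.

Lemma cRe_sum I (r : seq I) (P : pred I) (F : I -> R[i]) :
  complex.Re (\sum_(i <- r | P i) F i) = \sum_(i <- r | P i) complex.Re (F i).
Proof. by apply: (big_morph (@complex.Re R)) => // -[a b] [c d]. Qed.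

Lemma cIm_sum I (r : seq I) (P : pred I) (F : I -> R[i]) :
  complex.Im (\sum_(i <- r | P i) F i) = \sum_(i <- r | P i) complex.Im (F i).
Proof. by apply: (big_morph (@complex.Im R)) => // -[a b] [c d]. Qed.

Lemma cRe_mul (z w : R[i]) :
  complex.Re (z * w) = complex.Re z * complex.Re w - complex.Im z * complex.Im w.
Proof. by case: z w => a b [c d]. Qed.

Lemma cIm_mul (z w : R[i]) :
  complex.Im (z * w) = complex.Re z * complex.Im w + complex.Im z * complex.Re w.
Proof. by case: z w => a b [c d]. Qed.

Lemma cRe_conj (z : R[i]) : complex.Re (Num.conj z) = complex.Re z.
Proof. by case: z. Qed.
Lemma cIm_conj (z : R[i]) : complex.Im (Num.conj z) = - complex.Im z.
Proof. by case: z. Qed.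
Lemma cRe_C (x : R) : complex.Re (x%:C)%C = x. Proof. by []. Qed.
Lemma cIm_C (x : R) : complex.Im (x%:C)%C = 0. Proof. by []. Qed.

Lemma real_spectral p (X : 'M[R]_p) : X^T = X ->
  exists (d : 'I_p -> R) (a b : 'I_p -> 'I_p -> R),
   (forall i j, \sum_l (a l i * a l j + b l i * b l j) = (i == j)%:R) /\
   (forall l i, \sum_k X i k * a l k = d l * a l i) /\
   (forall l i, \sum_k X i k * b l k = d l * b l i) /\
   (forall l, \sum_i (a l i ^+ 2 + b l i ^+ 2) = 1).
Proof.
move=> Xsym.
pose Xc : 'M[R[i]]_p := map_mx (fun x => (x%:C)%C) X.
have Xh : Xc \is hermsymmx.
  apply/is_hermitianmxP; rewrite expr0 scale1r.
  apply/matrixP => i j; rewrite !mxE.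
  have := congr1 (fun M : 'M[R]_p => M i j) Xsym; rewrite mxE => ->.
  exact: (esym (conjc_real _)).
have /orthomx_spectralP XE := hermitian_normalmx Xh.
set P := spectralmx Xc in XE; set sp := spectral_diag Xc in XE.
have Pu : P \is unitarymx := spectral_unitarymx Xc.
have spR : sp \is a realmx := hermitian_spectral_diag_real Xh.
rewrite invmx_unitary // in XE.
set V := (P ^t*)%sesqui in XE.
have PV : P *m V = 1%:M by apply/unitarymxP.
have VP : V *m P = 1%:M.
  by rewrite /V -invmx_unitary // mulVmx // unitarymx_unit.
have XV : Xc *m V = V *m diag_mx sp by rewrite XE -!mulmxA PV mulmx1.
have spIm : forall l, complex.Im (sp 0 l) = 0.
  move=> l; have := mxOverP spR 0 l => /RIm_real.
  by case.
exists (fun l => complex.Re (sp 0 l)),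
  (fun l i => complex.Re (V i l)), (fun l i => complex.Im (V i l)).
split; [|split; [|split]].
- move=> i j.
  have -> : ((i == j)%:R : R) = complex.Re ((1%:M : 'M[R[i]]_p) i j).
    by rewrite mxE; case: eqP.
  rewrite -VP mxE cRe_sum.
  apply: eq_bigr => l _; rewrite cRe_mul /V !mxE.
  by case: (P l i) (P l j) => a b [c d] /=; ring.
- move=> l i.
  have := congr1 (fun M : 'M[R[i]]_p => complex.Re (M i l)) XV.
  rewrite mul_mx_diag !mxE cRe_sum cRe_mul spIm mulr0 subr0 mulrC => <-.
  apply: eq_bigr => k _; rewrite !mxE cRe_mul /=.
  by rewrite mul0r subr0.
- move=> l i.
  have := congr1 (fun M : 'M[R[i]]_p => complex.Im (M i l)) XV.
  rewrite mul_mx_diag !mxE cIm_sum cIm_mul spIm mulr0 add0r mulrC => <-.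
  apply: eq_bigr => k _; rewrite !mxE cIm_mul /=.
  by rewrite mul0r addr0.
- move=> l.
  have := congr1 (fun M : 'M[R[i]]_p => complex.Re (M l l)) PV.
  rewrite !mxE eqxx cRe_sum /= => <-.
  apply: eq_bigr => k _; rewrite /V !mxE.
  by case: (P l k) => a b /=; ring.
Qed.
End RS.

Set Implicit Arguments. Unset Strict Implicit.


Section SC.
Local Open Scope classical_set_scope.
Variable R : realType.

Definition specd p (X : 'M[R]_p) (d : 'I_p -> R) (a b : 'I_p -> 'I_p -> R) :=
   (forall i j, \sum_l (a l i * a l j + b l i * b l j) = (i == j)%:R) /\
   (forall l i, \sum_k X i k * a l k = d l * a l i) /\
   (forall l i, \sum_k X i k * b l k = d l * b l i) /\
   (forall l, \sum_i (a l i ^+ 2 + b l i ^+ 2) = 1).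



Lemma cvg_finsum n0 (u : 'I_n0 -> nat -> R) (L : 'I_n0 -> R) :
  (forall l, u l n @[n --> \oo] --> L l) ->
  (\sum_(l < n0) u l n) @[n --> \oo] --> \sum_(l < n0) L l.
Proof.
elim: n0 u L => [|n0 IH] u L H.
  under eq_fun do rewrite big_ord0. rewrite big_ord0; exact: cvg_cst.
under eq_fun do rewrite big_ord_recr /=. rewrite big_ord_recr /=.
apply: cvgD; last exact: H.
by apply: IH => l; exact: H.
Qed.

Lemma pow_spec p (X : 'M[R]_p) d a b : specd X d a b ->
  forall k i j, (X ^+ k) i j = \sum_l d l ^+ k * (a l i * a l j + b l i * b l j).
Proof.
move=> [S1 [S2a [S2b S3]]]; elim=> [|k IH] i j.
  rewrite expr0 mxE -S1; apply: eq_bigr => l _; by rewrite expr0 mul1r.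
rewrite exprS -mulmxE mxE.
under eq_bigr do rewrite IH big_distrr /=.
rewrite exchange_big /=; apply: eq_bigr => l _.
transitivity (d l ^+ k * ((\sum_k0 X i k0 * a l k0) * a l j +
                           (\sum_k0 X i k0 * b l k0) * b l j)).
  rewrite !big_distrl /= -big_split big_distrr /=; apply: eq_bigr => m _; ring.
by rewrite S2a S2b exprS; ring.
Qed.

Lemma mexp_spec p (X : 'M[R]_p) d a b : specd X d a b ->
  forall i j, mexp X i j = \sum_l expR (d l) * (a l i * a l j + b l i * b l j).
Proof.
move=> Hs i j; rewrite /mexp mxE.
apply: cvg_lim => //.
have -> : series (fun k => (X ^+ k) i j / (k`!)%:R) =
  (fun n => \sum_l (a l i * a l j + b l i * b l j) * series (exp_coeff (d l)) n).
  apply/funext => n; rewrite seriesEord /=.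
  under eq_bigr do rewrite (pow_spec Hs) big_distrl /=.
  rewrite exchange_big /=; apply: eq_bigr => l _.
  rewrite seriesEord /= big_distrr /=; apply: eq_bigr => k _.
  rewrite /exp_coeff /=; ring.
apply: cvg_finsum => l; rewrite [X in _ --> X]mulrC; apply: cvgMr.
exact: is_cvg_series_exp_coeff.
Qed.

End SC.

Set Implicit Arguments. Unset Strict Implicit.

Section SD.
Variable R : realType.
Variable p : nat.
Implicit Types (X Y Z M : 'M[R]_p).
Hypothesis p0 : (0 < p)%N.

Lemma frobE M Y : frob M Y = \sum_i \sum_j M i j * Y i j.
Proof.
rewrite /frob /mxtrace exchange_big /=; apply: eq_bigr => i _.
by rewrite mxE; apply: eq_bigr => j _; rewrite mxE.
Qed.

Lemma quadE M (x : 'cV[R]_p) :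
  (x^T *m M *m x) 0 0 = \sum_i \sum_j x i 0 * M i j * x j 0.
Proof.
rewrite mxE exchange_big /=; apply: eq_bigr => j _.
by rewrite mxE big_distrl /=; apply: eq_bigr => i _; rewrite mxE.
Qed.

Lemma sqr_sum (f : 'I_p -> R) : \sum_i \sum_j f i * f j = (\sum_i f i) ^+ 2.
Proof. by rewrite expr2 big_distrl /=; apply: eq_bigr => i _; rewrite big_distrr. Qed.

Definition Pm (a b : 'I_p -> 'I_p -> R) l : 'M[R]_p :=
  \matrix_(i, j) (a l i * a l j + b l i * b l j).

Lemma frob_Pm M a b l :
  frob M (Pm a b l) = \sum_i \sum_j a l i * M i j * a l j
                    + \sum_i \sum_j b l i * M i j * b l j.
Proof.
rewrite frobE -big_split /=; apply: eq_bigr => i _.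
rewrite -big_split /=; apply: eq_bigr => j _; rewrite mxE; ring.
Qed.

Lemma frob_Pm_spec X d a b l : specd X d a b -> frob X (Pm a b l) = d l.
Proof.
move=> [S1 [S2a [S2b S3]]]; rewrite frob_Pm.
have H1 : forall i, \sum_j a l i * X i j * a l j = d l * a l i ^+ 2.
  move=> i; under eq_bigr do rewrite -mulrA.
  by rewrite -big_distrr /= S2a; ring.
have H2 : forall i, \sum_j b l i * X i j * b l j = d l * b l i ^+ 2.
  move=> i; under eq_bigr do rewrite -mulrA.
  by rewrite -big_distrr /= S2b; ring.
under eq_bigr do rewrite H1. under [X in _ + X]eq_bigr do rewrite H2.
by rewrite -big_split /= -[RHS]mulr1 -(S3 l) big_distrr /=; apply: eq_bigr => i _; ring.
Qed.


Definition qf M (u : 'I_p -> R) := \sum_i \sum_j u i * M i j * u j.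

Lemma qf_Pm a b l u :
  qf (Pm a b l) u = (\sum_i a l i * u i) ^+ 2 + (\sum_i b l i * u i) ^+ 2.
Proof.
rewrite /qf -!sqr_sum -big_split /=; apply: eq_bigr => i _.
rewrite -big_split /=; apply: eq_bigr => j _; rewrite mxE; ring.
Qed.

Lemma qf_Pm_ge0 a b l u : 0 <= qf (Pm a b l) u.
Proof. by rewrite qf_Pm addr_ge0 // sqr_ge0. Qed.

Lemma frob_Pm_qf M a b l : frob M (Pm a b l) = qf M (a l) + qf M (b l).
Proof.
rewrite frob_Pm /qf; congr (_ + _); apply: eq_bigr => i _; apply: eq_bigr => j _; ring.
Qed.

Lemma frobDl M Y Z : frob (M + Y) Z = frob M Z + frob Y Z.
Proof.
rewrite !frobE -big_split; apply: eq_bigr => i _; rewrite -big_split; apply: eq_bigr => j _.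
by rewrite !mxE mulrDl.
Qed.

Lemma frobDr M Y Z : frob Z (M + Y) = frob Z M + frob Z Y.
Proof.
rewrite !frobE -big_split; apply: eq_bigr => i _; rewrite -big_split; apply: eq_bigr => j _.
by rewrite !mxE mulrDr.
Qed.

Lemma frob0l M : frob 0 M = 0.
Proof. by rewrite frobE big1 // => i _; rewrite big1 // => j _; rewrite mxE mul0r. Qed.
Lemma frob0r M : frob M 0 = 0.
Proof. by rewrite frobE big1 // => i _; rewrite big1 // => j _; rewrite mxE mulr0. Qed.

Lemma frob_suml I (r : seq I) (P : pred I) (F : I -> 'M[R]_p) M :
  frob (\sum_(k <- r | P k) F k) M = \sum_(k <- r | P k) frob (F k) M.
Proof. by apply: (big_morph (fun A => frob A M)) => [A B|]; rewrite ?frobDl ?frob0l. Qed.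

Lemma frob_sumr I (r : seq I) (P : pred I) (F : I -> 'M[R]_p) M :
  frob M (\sum_(k <- r | P k) F k) = \sum_(k <- r | P k) frob M (F k).
Proof. by apply: (big_morph (fun A => frob M A)) => [A B|]; rewrite ?frobDr ?frob0r. Qed.

Lemma frobZl c M Y : frob (c *: M) Y = c * frob M Y.
Proof.
rewrite !frobE big_distrr; apply: eq_bigr => i _; rewrite big_distrr; apply: eq_bigr => j _.
by rewrite mxE -mulrA.
Qed.

Lemma frobZr c M Y : frob M (c *: Y) = c * frob M Y.
Proof.
rewrite !frobE big_distrr; apply: eq_bigr => i _; rewrite big_distrr; apply: eq_bigr => j _.
by rewrite mxE /= mulrCA.
Qed.

Lemma frobC M Y : frob M Y = frob Y M.
Proof. by rewrite !frobE; apply: eq_bigr => i _; apply: eq_bigr => j _; rewrite mulrC. Qed.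

Lemma frobBl M Y Z : frob (M - Y) Z = frob M Z - frob Y Z.
Proof.
rewrite !frobE -sumrB; apply: eq_bigr => i _; rewrite -sumrB; apply: eq_bigr => j _.
by rewrite !mxE; ring.
Qed.

Lemma frob1 M : frob M 1%:M = \tr M.
Proof.
rewrite frobE /mxtrace; apply: eq_bigr => i _.
rewrite (bigD1 i) //= big1 => [|j /negbTE ji]; rewrite !mxE ?eqxx ?mulr1 ?addr0 //.
by rewrite eq_sym ji mulr0.
Qed.

Lemma spec_sumPm X d a b : specd X d a b -> \sum_l Pm a b l = 1%:M.
Proof.
move=> [S1 _]; apply/matrixP => i j; rewrite summxE !mxE -S1.
by apply: eq_bigr => l _; rewrite mxE.
Qed.

Lemma spec_X X d a b : specd X d a b -> X = \sum_l d l *: Pm a b l.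
Proof.
move=> Hs; apply/matrixP => i j; rewrite summxE; have := pow_spec Hs 1 i j; rewrite expr1 => ->.
by apply: eq_bigr => l _; rewrite !mxE expr1.
Qed.

Lemma spec_mexp X d a b : specd X d a b -> mexp X = \sum_l expR (d l) *: Pm a b l.
Proof.
move=> Hs; apply/matrixP => i j; rewrite summxE (mexp_spec Hs).
by apply: eq_bigr => l _; rewrite !mxE.
Qed.

Lemma tr_Pm X d a b l : specd X d a b -> \tr (Pm a b l) = 1.
Proof.
move=> [_ [_ [_ S3]]]; rewrite -(S3 l) /mxtrace; apply: eq_bigr => i _.
by rewrite mxE !expr2.
Qed.

Lemma tr_mexp X d a b : specd X d a b -> \tr (mexp X) = \sum_l expR (d l).
Proof.
move=> Hs; rewrite (spec_mexp Hs) raddf_sum /=; apply: eq_bigr => l _.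
by rewrite mxtraceZ (tr_Pm l Hs) mulr1.
Qed.


Lemma ln_le_sub1 (x : R) : 0 < x -> ln x <= x - 1.
Proof. move=> x0; have := expR_ge1Dx (ln x); rewrite lnK ?posrE //; lra. Qed.

Lemma jensen_exp (I : finType) (w x : I -> R) :
  (forall i, 0 <= w i) -> \sum_i w i = 1 ->
  expR (\sum_i w i * x i) <= \sum_i w i * expR (x i).
Proof.
move=> w0 w1; set c := \sum_i w i * x i.
have H : forall i, w i * (expR c * (1 + (x i - c))) <= w i * expR (x i).
  move=> i; apply: ler_wpM2l => //.
  have -> : x i = c + (x i - c) by ring.
  rewrite expRD; have -> : c + (x i - c) - c = x i - c by ring.
  by apply: ler_wpM2l; [exact: ltW (expR_gt0 _)| exact: expR_ge1Dx].
apply: le_trans (ler_sum _ (fun i _ => H i)).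
have -> : \sum_i w i * (expR c * (1 + (x i - c))) =
   expR c * (\sum_i w i + \sum_i w i * x i - c * \sum_i w i).
  rewrite (eq_bigr (fun i => expR c * w i + expR c * (w i * x i) - (expR c * c) * w i)); last by move=> i _; ring.
  rewrite sumrB big_split /= -!big_distrr /=; ring.
by rewrite w1 -/c mulr1 addrK mulr1.
Qed.

Lemma psd_qf (rho : 'M[R]_p) u : density rho -> 0 <= qf rho u.
Proof.
move=> [_ [H _]]; have -> : qf rho u = ((\col_i u i)^T *m rho *m \col_i u i) 0 0.
  by rewrite quadE /qf; apply: eq_bigr => i _; apply: eq_bigr => j _; rewrite !mxE.
exact: H.
Qed.

Lemma sum_ge_term (I : finType) (f : I -> R) i : (forall j, 0 <= f j) -> f i <= \sum_j f j.
Proof.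
move=> f0; rewrite (bigD1 i) //= lerDl; exact: sumr_ge0.
Qed.

Lemma gibbs X d a b (rho : 'M[R]_p) : specd X d a b -> density rho ->
  frob X rho <= ln (\tr (mexp X)).
Proof.
move=> Hs Hr; rewrite (tr_mexp Hs) (spec_X Hs) frob_suml.
under eq_bigr do rewrite frobZl.
set S := \sum_l expR (d l).
have S0 : 0 < S.
  apply: (lt_le_trans (expR_gt0 (d (Ordinal p0)))).
  by apply: sum_ge_term => j; exact: ltW (expR_gt0 _).
have r0 : forall l, 0 <= frob (Pm a b l) rho.
  by move=> l; rewrite frobC frob_Pm_qf addr_ge0 // psd_qf.
have r1 : \sum_l frob (Pm a b l) rho = 1.
  by rewrite -frob_suml (spec_sumPm Hs) frobC frob1; case: Hr => _ [].
have dS : forall l, d l <= ln S.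
  move=> l; rewrite -[d l]expRK ler_ln ?posrE ?expR_gt0 //.
  by apply: sum_ge_term => j; exact: ltW (expR_gt0 _).
apply: (@le_trans _ _ (\sum_l ln S * frob (Pm a b l) rho)).
  by apply: ler_sum => l _; apply: ler_wpM2r.
by rewrite -big_distrr /= r1 mulr1.
Qed.


Lemma eq_ler (x y : R) : x = y -> x <= y. Proof. by move->. Qed.

Lemma sum_exp_gt0 (d : 'I_p -> R) : 0 < \sum_l expR (d l).
Proof.
apply: (lt_le_trans (expR_gt0 (d (Ordinal p0)))).
by apply: sum_ge_term => j; exact: ltW (expR_gt0 _).
Qed.

Lemma PB X Z dX aX bX dZ aZ bZ : specd X dX aX bX -> specd Z dZ aZ bZ ->
  ln (\tr (mexp X)) - ln (\tr (mexp Z)) <= frob (X - Z) (mexp X) / \tr (mexp X).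
Proof.
move=> HX HZ; rewrite (tr_mexp HX) (tr_mexp HZ).
set S := \sum_l expR (dX l).
have S0 : 0 < S := sum_exp_gt0 dX.
pose W l m := frob (Pm aZ bZ m) (Pm aX bX l).
have W0 : forall l m, 0 <= W l m.
  by move=> l m; rewrite /W frob_Pm_qf addr_ge0 // qf_Pm_ge0.
have W1 : forall l, \sum_m W l m = 1.
  by move=> l; rewrite /W -frob_suml (spec_sumPm HZ) frobC frob1 (tr_Pm l HX).
have W2 : forall m, \sum_l W l m = 1.
  by move=> m; rewrite /W -frob_sumr (spec_sumPm HX) frob1 (tr_Pm m HZ).
pose y l := frob (X - Z) (Pm aX bX l).
have yE : forall l, \sum_m W l m * dZ m = dX l - y l.
  move=> l; rewrite /y frobBl (frob_Pm_spec l HX) [in frob Z _](spec_X HZ) frob_suml.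
  have -> : forall u v : R, u - (u - v) = v by move=> u v; ring.
  by apply: eq_bigr => m _; rewrite frobZl mulrC.
have F : frob (X - Z) (mexp X) = \sum_l expR (dX l) * y l.
  by rewrite [in frob _ (mexp X)](spec_mexp HX) frob_sumr; apply: eq_bigr => l _; rewrite frobZr.
have T1 : \sum_l expR (dX l) * expR (- y l) <= \sum_m expR (dZ m).
  apply: (@le_trans _ _ (\sum_l \sum_m W l m * expR (dZ m))).
    apply: ler_sum => l _; rewrite -expRD -yE.
    exact: jensen_exp.
  rewrite exchange_big /=; apply: eq_ler.
  by apply: eq_bigr => m _; rewrite -big_distrl /= W2 mul1r.
have T2 : S * expR (\sum_l (expR (dX l) / S) * - y l) <=
          \sum_l expR (dX l) * expR (- y l).
  have J := @jensen_exp _ (fun l => expR (dX l) / S) (fun l => - y l).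
  have : S * expR (\sum_l (expR (dX l) / S) * - y l) <=
         S * \sum_l (expR (dX l) / S) * expR (- y l).
    apply: ler_wpM2l; first exact: ltW.
    apply: J => [l|]; first by apply: divr_ge0; apply: ltW => //; exact: expR_gt0.
    by rewrite -big_distrl /= -/S divff // gt_eqF.
  move=> H; apply: (le_trans H); apply: eq_ler; rewrite big_distrr /=; apply: eq_bigr => l _.
  by field; rewrite gt_eqF.
have E1 : \sum_l (expR (dX l) / S) * - y l = - (frob (X - Z) (mexp X) / S).
  rewrite F big_distrl /= -sumrN; apply: eq_bigr => l _; by field; rewrite gt_eqF.
rewrite E1 in T2.
have T3 := le_trans T2 T1.
have P1 : 0 < S * expR (- (frob (X - Z) (mexp X) / S)) by rewrite mulr_gt0 // expR_gt0.
have := T3; rewrite -ler_ln ?posrE //; last exact: lt_le_trans T3.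
rewrite lnM ?posrE ?expR_gt0 // expRK; lra.
Qed.


Lemma qf_frob M u : qf M u = frob M (\matrix_(i, j) (u i * u j)).
Proof. by rewrite /qf frobE; apply: eq_bigr => i _; apply: eq_bigr => j _; rewrite mxE; ring. Qed.

Lemma quad_rho X d a b (z : 'cV[R]_p) : specd X d a b ->
  0 <= (z^T *m ((\tr (mexp X))^-1 *: mexp X) *m z) 0 0 <= sqnorm z.
Proof.
move=> Hs; set u := fun i => z i 0.
have -> : (z^T *m ((\tr (mexp X))^-1 *: mexp X) *m z) 0 0 =
   (\tr (mexp X))^-1 * qf (mexp X) u.
  rewrite quadE /qf big_distrr; apply: eq_bigr => i _; rewrite big_distrr.
  by apply: eq_bigr => j _; rewrite mxE /u /=; ring.
have -> : sqnorm z = qf 1%:M u.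
  rewrite /sqnorm /qf mxE; apply: eq_bigr => i _.
  rewrite (bigD1 i) //= big1 => [|j /negbTE ji]; rewrite !mxE ?eqxx ?mulr1 ?addr0 //.
  by rewrite eq_sym ji mulr0 mul0r.
rewrite (tr_mexp Hs) -(spec_sumPm Hs) !qf_frob frob_suml (spec_mexp Hs) frob_suml.
have S0 := sum_exp_gt0 d.
set S := \sum_l expR (d l) in S0 *.
have q0 : forall l, 0 <= frob (Pm a b l) (\matrix_(i, j) (u i * u j)).
  by move=> l; rewrite -qf_frob qf_Pm_ge0.
apply/andP; split.
  apply: mulr_ge0; first by rewrite invr_ge0 ltW.
  by apply: sumr_ge0 => l _; rewrite frobZl mulr_ge0 // ltW // expR_gt0.
rewrite ler_pdivrMl // big_distrr /=; apply: ler_sum => l _.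
rewrite frobZl; apply: ler_wpM2r => //.
by apply: sum_ge_term => j; exact: ltW (expR_gt0 _).
Qed.

End SD.

Set Implicit Arguments. Unset Strict Implicit.

Section SE.
Variable R : realType.
Variables N p : nat.
Hypothesis p0 : (0 < p)%N.
Variables (g : 'I_N -> 'cV[R]_p) (mu : 'cV[R]_p).

Lemma Smat_sym w' : (Smat g mu w')^T = Smat g mu w'.
Proof.
rewrite /Smat raddf_sum /=; apply: eq_bigr => n _.
by rewrite linearZ /= trmx_mul trmxK.
Qed.

Lemma frob_Smat w' M :
  frob (Smat g mu w') M = \sum_n w' n * ((zvec g mu n)^T *m M *m zvec g mu n) 0 0.
Proof.
rewrite /Smat frob_suml; apply: eq_bigr => n _; rewrite frobZl; congr (_ * _).
rewrite frobE quadE; apply: eq_bigr => i _; apply: eq_bigr => j _.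
by rewrite !mxE big_ord1 !mxE; ring.
Qed.

Definition Xs eta (w : nat -> 'I_N -> R) t :=
  eta *: \sum_(1 <= t' < t.+1) Smat g mu (w t').

Lemma Xs_sym eta w t : (Xs eta w t)^T = Xs eta w t.
Proof.
rewrite /Xs linearZ /= raddf_sum /=; congr (_ *: _).
by apply: eq_bigr => i _; rewrite Smat_sym.
Qed.

Lemma spec_ex (X : 'M[R]_p) : X^T = X -> exists d a b, specd X d a b.
Proof. exact: real_spectral. Qed.

Lemma tr_mexp0 : \tr (mexp (0 : 'M[R]_p)) = p%:R.
Proof.
have [d [a [b Hs]]] := spec_ex (@trmx0 R p p).
rewrite (tr_mexp Hs).
have d0 : forall l, d l = 0 by move=> l; rewrite -(frob_Pm_spec l Hs) frob0l.
under eq_bigr do rewrite d0 expR0.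
by rewrite sumr_const card_ord.
Qed.

Lemma mmw eta (w : nat -> 'I_N -> R) T (rho : 'M[R]_p) : 0 < eta -> density rho ->
  \sum_(1 <= t < T.+1) frob (Smat g mu (w t)) rho <=
  \sum_(1 <= t < T.+1) frob (Smat g mu (w t)) (rhomat g mu eta w t) + ln p%:R / eta.
Proof.
move=> eta0 Hr.
pose Phi t := ln (\tr (mexp (Xs eta w t))).
have rhoE : forall t, rhomat g mu eta w t = (\tr (mexp (Xs eta w t)))^-1 *: mexp (Xs eta w t).
  by [].
have A : forall T0, Phi T0 - ln p%:R <=
   eta * \sum_(1 <= t < T0.+1) frob (Smat g mu (w t)) (rhomat g mu eta w t).
  elim=> [|T0 IH].
    rewrite big_geq // mulr0 /Phi /Xs big_geq // scaler0 tr_mexp0 subrr //.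
  rewrite big_nat_recr //= mulrDr.
  have step : Phi T0.+1 - Phi T0 <= eta * frob (Smat g mu (w T0.+1)) (rhomat g mu eta w T0.+1).
    have [dX [aX [bX HX]]] := spec_ex (Xs_sym eta w T0.+1).
    have [dZ [aZ [bZ HZ]]] := spec_ex (Xs_sym eta w T0).
    have := PB p0 HX HZ.
    have -> : Xs eta w T0.+1 - Xs eta w T0 = eta *: Smat g mu (w T0.+1).
      by rewrite /Xs big_nat_recr //= scalerDr addrAC subrr add0r.
    by rewrite rhoE frobZl frobZr mulrCA mulrC.
  lra.
have B : frob (Xs eta w T) rho = eta * \sum_(1 <= t < T.+1) frob (Smat g mu (w t)) rho.
  by rewrite /Xs frobZl frob_suml.
have [d [a [b Hs]]] := spec_ex (Xs_sym eta w T).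
have G := gibbs p0 Hs Hr.
rewrite -(ler_pM2l eta0) mulrDr mulrCA divff ?gt_eqF // mulr1.
have := A T; rewrite -/(Phi T) in G; lra.
Qed.

End SE.

Set Implicit Arguments. Unset Strict Implicit.

Section SF.
Variable R : realType.

Lemma eq_ler' (x y : R) : x = y -> x <= y. Proof. by move->. Qed.
Lemma ln_le_sub1' (x : R) : 0 < x -> ln x <= x - 1.
Proof. move=> x0; have := expR_ge1Dx (ln x); rewrite lnK ?posrE //; lra. Qed.

Lemma expR_ge_P2 (y : R) : 0 <= y -> 1 + y + y ^+ 2 / 2 <= expR y.
Proof.
move=> y0.
have H : series (exp_coeff y) 3 <= expR y.
  apply: nondecreasing_cvgn_le; last exact: is_cvg_series_exp_coeff.
  apply: nondecreasing_series => n _ _.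
  by rewrite /exp_coeff /= divr_ge0 // exprn_ge0.
apply: le_trans H; rewrite seriesEord /= !big_ord_recr big_ord0 /= /exp_coeff /=.
rewrite expr0 expr1 add0r.
have -> : ((1 + 1)%R)`!%:R = 2 :> R by [].
have -> : 1`!%:R = 1 :> R by [].
by rewrite !divr1.


Qed.


Lemma ln1B_ge (x : R) : 0 <= x -> x <= 2^-1 -> - ln (1 - x) <= x + x ^+ 2.
Proof.
move=> x0 x1; set y := x + x ^+ 2.
have y0 : 0 <= y by rewrite /y addr_ge0 // sqr_ge0.
have P := expR_ge_P2 y0.
have x1' : 0 < 1 - x by lra.
have Q : 1 <= (1 - x) * (1 + y + y ^+ 2 / 2).
  have -> : (1 - x) * (1 + y + y ^+ 2 / 2) = 1 + x ^+ 2 * (1 - x - x ^+ 2 - x ^+ 3) / 2.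
    by rewrite /y; field.
  rewrite lerDl; apply: mulr_ge0 => //; apply: mulr_ge0; first exact: sqr_ge0.
  have h2 : x ^+ 2 <= 4^-1 by rewrite expr2; nra.
  have h3 : x ^+ 3 <= 8^-1 by rewrite exprS expr2; nra.
  lra.
have Q2 : 1 <= (1 - x) * expR y.
  apply: le_trans Q _; apply: ler_wpM2l; [lra | exact: P].
have := Q2; rewrite -ler_ln ?posrE ?ltr01 //; last by rewrite mulr_gt0 // expR_gt0.
rewrite ln1 lnM ?posrE ?expR_gt0 // expRK; lra.
Qed.


Definition phi (c x : R) := if x == 0 then 0 else x * ln (x / c).

Lemma phi_F1 (c x u : R) : 0 < c -> 0 < x -> 0 <= u ->
  phi c u - phi c x <= (u - x) * (ln (x / c) + 1) + (u - x) ^+ 2 / x.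
Proof.
move=> c0 x0 u0; rewrite /phi (gt_eqF x0).
have [->|un0] := eqVneq u 0.
  apply: eq_ler'; field; exact: lt0r_neq0.
have u0' : 0 < u by rewrite lt_neqAle eq_sym un0 u0.
have E : ln (u / c) = ln (u / x) + ln (x / c).
  rewrite -lnM ?posrE ?divr_gt0 //; congr ln; field; apply/andP; split; exact: lt0r_neq0.
rewrite E.
have L := ln_le_sub1' (divr_gt0 u0' x0).
have : u * ln (u / x) <= u * (u / x - 1) by apply: ler_wpM2l => //; exact: ltW.
have -> : u * (u / x - 1) = (u - x) * u / x by field; exact: lt0r_neq0.
move=> H.
have -> : (u - x) ^+ 2 / x = (u - x) * u / x - (u - x) by field; exact: lt0r_neq0.
lra.
Qed.


Lemma phi_F2 (c s y : R) : 0 < c -> 0 < s -> 0 <= y ->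
  phi c (s * y) = s * phi c y + s * ln s * y.
Proof.
move=> c0 s0 y0; rewrite /phi.
have [->|yn0] := eqVneq y 0; first by rewrite mulr0 eqxx !mulr0 addr0.
have y0' : 0 < y by rewrite lt_neqAle eq_sym yn0 y0.
rewrite mulf_eq0 (gt_eqF s0) (negbTE yn0) /=.
have -> : s * y / c = s * (y / c) by rewrite mulrA.
rewrite lnM ?posrE ?divr_gt0 //; ring.
Qed.

Lemma phi_ge (c x : R) : 0 < c -> 0 <= x -> x - c <= phi c x.
Proof.
move=> c0 x0; rewrite /phi; have [->|xn0] := eqVneq x 0; first by rewrite sub0r oppr_le0 ltW.
have x0' : 0 < x by rewrite lt_neqAle eq_sym xn0 x0.
have L := ln_le_sub1' (divr_gt0 c0 x0').
have E : ln (x / c) = - ln (c / x).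
  rewrite -lnV ?posrE ?divr_gt0 //; congr ln; rewrite invf_div //.
rewrite E.
have : x * ln (c / x) <= x * (c / x - 1) by apply: ler_wpM2l => //; exact: ltW.
have -> : x * (c / x - 1) = c - x by field; exact: lt0r_neq0.
lra.
Qed.


Variable N : nat.

Lemma proj_key (eps : R) (c w' v : 'I_N -> R) (s : R) :
  (forall n, 0 < c n) -> is_RE_proj eps c w' -> capped_simplex eps v -> 0 < s -> s <= 1 ->
  0 <= \sum_n (if w' n == 0 then phi (c n) (v n) else (v n - w' n) * (ln (w' n / c n) + 1))
     + s * \sum_n (if w' n == 0 then 0 else (v n - w' n) ^+ 2 / w' n)
     + ln s * \sum_n (if w' n == 0 then v n else 0).
Proof.
move=> c0 [[w1 wK] wmin] [v1 vK] s0 s1.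
pose u n := w' n + s * (v n - w' n).
have uK : capped_simplex eps u.
  split.
    by rewrite /u big_split /= -big_distrr /= sumrB w1 v1 subrr mulr0 addr0.
  move=> n; have [a1 a2] := wK n; have [b1 b2] := vK n.
  have -> : u n = (1 - s) * w' n + s * v n by rewrite /u; ring.
  split; first by rewrite addr_ge0 // mulr_ge0 //; lra.
  set K := ((1 - eps) * N%:R)^-1 in a2 b2 *.
  have -> : K = (1 - s) * K + s * K by ring.
  rewrite lerD //; apply: ler_wpM2l => //; lra.
have H := wmin u uK.
have T : forall n, phi (c n) (u n) - phi (c n) (w' n) <=
   s * (if w' n == 0 then phi (c n) (v n) else (v n - w' n) * (ln (w' n / c n) + 1))
   + s ^+ 2 * (if w' n == 0 then 0 else (v n - w' n) ^+ 2 / w' n)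
   + s * ln s * (if w' n == 0 then v n else 0).
  move=> n; have [a1 a2] := wK n; have [b1 b2] := vK n.
  have [e|ne] := eqVneq (w' n) 0.
    rewrite /u e subr0 add0r (phi_F2 (c0 n) s0 b1) {2}/phi eqxx subr0 mulr0 addr0.
    exact: le_refl.
  have w0 : 0 < w' n by rewrite lt_neqAle eq_sym ne a1.
  have u0 : 0 <= u n.
    rewrite /u; have -> : w' n + s * (v n - w' n) = (1 - s) * w' n + s * v n by ring.
    by rewrite addr_ge0 // mulr_ge0 //; lra.
  apply: le_trans (phi_F1 (c0 n) w0 u0) _; apply: eq_ler'; rewrite /u.
  by field; exact: lt0r_neq0.
have H2 : 0 <= \sum_n (phi (c n) (u n) - phi (c n) (w' n)).
  by rewrite sumrB; move: H; rewrite /RE /phi; lra.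
have H3 := le_trans H2 (ler_sum _ (fun n _ => T n)).
rewrite -(pmulr_rge0 _ s0); apply: le_trans H3 _; apply: eq_ler'.
rewrite !big_split /= -!big_distrr /=; ring.
Qed.


Lemma Bnonneg (w' v : 'I_N -> R) : (forall n, 0 <= w' n) ->
  0 <= \sum_n (if w' n == 0 then 0 else (v n - w' n) ^+ 2 / w' n).
Proof.
move=> w0; apply: sumr_ge0 => n _; case: ifP => // _.
by rewrite divr_ge0 // sqr_ge0.
Qed.

Lemma G_zero (eps : R) (c w' v : 'I_N -> R) :
  (forall n, 0 < c n) -> is_RE_proj eps c w' -> capped_simplex eps v ->
  \sum_n (if w' n == 0 then v n else 0) = 0.
Proof.
move=> c0 Hp Hv.
have [[_ wK] _] := Hp; have [_ vK] := Hv.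
pose A := \sum_n (if w' n == 0 then phi (c n) (v n) else (v n - w' n) * (ln (w' n / c n) + 1)).
pose B := \sum_n (if w' n == 0 then 0 else (v n - w' n) ^+ 2 / w' n).
pose G := \sum_n (if w' n == 0 then v n else 0).
rewrite -/G.
have G0 : 0 <= G by apply: sumr_ge0 => n _; case: ifP => // _; case: (vK n).
have B0 : 0 <= B by apply: Bnonneg => n; case: (wK n).
have [Gp|] := ltrP 0 G; last by move=> h; apply/eqP; rewrite eq_le h G0.
exfalso.
set s := expR (- ((`|A| + B + 1) / G)).
have s0 : 0 < s by exact: expR_gt0.
have s1 : s <= 1.
  rewrite /s -expR0 ler_expR oppr_le0.
  apply: divr_ge0; last exact: ltW.
  by rewrite !addr_ge0.
have := proj_key c0 Hp Hv s0 s1; rewrite -/A -/B -/G /s expRK.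
rewrite mulNr divfK ?gt_eqF //.
have : expR (- ((`|A| + B + 1) / G)) * B <= B.
  by rewrite ler_piMl //.
have := ler_norm A.
lra.
Qed.


Lemma A_nonneg (eps : R) (c w' v : 'I_N -> R) :
  (forall n, 0 < c n) -> is_RE_proj eps c w' -> capped_simplex eps v ->
  0 <= \sum_n (if w' n == 0 then phi (c n) (v n) else (v n - w' n) * (ln (w' n / c n) + 1)).
Proof.
move=> c0 Hp Hv.
have [[_ wK] _] := Hp.
pose A := \sum_n (if w' n == 0 then phi (c n) (v n) else (v n - w' n) * (ln (w' n / c n) + 1)).
pose B := \sum_n (if w' n == 0 then 0 else (v n - w' n) ^+ 2 / w' n).
have B0 : 0 <= B by apply: Bnonneg => n; case: (wK n).
have G0 := G_zero c0 Hp Hv.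
rewrite -/A; have [//|An] := leP 0 A.
exfalso.
set s := - A / (- A + B + 1).
have d0 : 0 < - A + B + 1 by lra.
have s0 : 0 < s by rewrite /s divr_gt0 //; lra.
have s1 : s <= 1 by rewrite /s ler_pdivrMr //; lra.
have := proj_key c0 Hp Hv s0 s1; rewrite -/A -/B G0 mulr0 addr0.
have -> : A + s * B = A * (1 - A) / (- A + B + 1) by rewrite /s; field; exact: lt0r_neq0.
rewrite pmulr_lge0 ?invr_gt0 //; nra.
Qed.

Lemma proj_main (eps : R) (c w' : 'I_N -> R) :
  (0 < N)%N -> 0 <= eps -> eps < 1 ->
  (forall n, 0 < c n) -> is_RE_proj eps c w' ->
  (forall n, 0 < w' n) /\ (forall v, capped_simplex eps v -> RE v w' <= RE v c - RE w' c).
Proof.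
move=> N0 e0 e1 c0 Hp.
have [[w1 wK] _] := Hp.
have wpos : forall n, 0 < w' n.
  pose v := fun _ : 'I_N => (N%:R : R)^-1.
  have Nr : 0 < (N%:R : R) by rewrite ltr0n.
  have Hv : capped_simplex eps v.
    split; first by rewrite /v sumr_const card_ord -[in LHS](mulr_natr ((N%:R : R)^-1)) mulVf // gt_eqF.
    move=> n; split; first by rewrite /v invr_ge0 ltW.
    rewrite /v lef_pV2 ?posrE ?mulr_gt0 //; last lra.
    rewrite ler_piMl // ?(ltW Nr) //; lra.
  have G0 := G_zero c0 Hp Hv.
  move=> n; have [a1 _] := wK n; rewrite lt_neqAle a1 andbT eq_sym; apply/negP => /eqP e.
  have H0 : forall i : 'I_N, true -> 0 <= (if w' i == 0 then v i else 0).
    by move=> i _; case: ifP => // _; rewrite /v invr_ge0 ltW.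
  have := psumr_eq0P H0 G0 isT (i:=n).
  by rewrite e eqxx /v => /eqP; rewrite invr_eq0 gt_eqF.
split => // v Hv.
have A0 := A_nonneg c0 Hp Hv.
have wn : forall n, (w' n == 0) = false by move=> n; rewrite gt_eqF.
rewrite (eq_bigr (fun n => (v n - w' n) * ln (w' n / c n) + (v n - w' n))) in A0;
  last by move=> n _; rewrite wn; ring.
have [v1 vK] := Hv.
rewrite big_split /= sumrB v1 w1 subrr addr0 in A0.
have E : forall n, phi (c n) (v n) - phi (c n) (w' n) - phi (w' n) (v n) =
                   (v n - w' n) * ln (w' n / c n).
  move=> n; have [b1 _] := vK n; rewrite /phi wn.
  have [->|vn] := eqVneq (v n) 0; first by ring.
  have v0 : 0 < v n by rewrite lt_neqAle eq_sym vn b1.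
  have -> : ln (v n / c n) = ln (v n / w' n) + ln (w' n / c n).
    rewrite -lnM ?posrE ?divr_gt0 //; congr ln; field.
    by apply/andP; split; rewrite gt_eqF.
  ring.
have : 0 <= \sum_n (phi (c n) (v n) - phi (c n) (w' n) - phi (w' n) (v n)).
  by rewrite (eq_bigr _ (fun n _ => E n)).
rewrite !sumrB /RE /phi; lra.
Qed.


Lemma RE_ge0 (eps : R) (v w' : 'I_N -> R) : capped_simplex eps v -> capped_simplex eps w' ->
  (forall n, 0 < w' n) -> 0 <= RE v w'.
Proof.
move=> [v1 vK] [w1 _] w0.
have : \sum_n (v n - w' n) <= RE v w'.
  rewrite /RE; apply: ler_sum => n _; have [b1 _] := vK n.
  exact: (phi_ge (w0 n) b1).
by rewrite sumrB v1 w1 subrr.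
Qed.

Lemma one_step (eps eta nu0 : R) (wt m w' v : 'I_N -> R) :
  (0 < N)%N -> 0 <= eps -> eps < 1 -> 0 < eta -> eta * nu0 <= 2^-1 ->
  capped_simplex eps wt -> (forall n, 0 < wt n) ->
  (forall n, 0 <= m n <= nu0) ->
  is_RE_proj eps (fun n => wt n * (1 - eta * m n)) w' ->
  capped_simplex eps v ->
  (forall n, 0 < w' n) /\
  RE v w' <= RE v wt + eta * (1 + eta * nu0) * \sum_n m n * v n
             - eta * \sum_n m n * wt n.
Proof.
move=> N0 e0 e1 eta0 en [wt1 wtK] wt0 m0 Hp Hv.
have xm : forall n, 0 <= eta * m n <= 2^-1.
  move=> n; have /andP[a b] := m0 n; apply/andP; split; first by rewrite mulr_ge0 // ltW.
  by apply: le_trans en; rewrite ler_wpM2l // ltW.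
have c0 : forall n, 0 < wt n * (1 - eta * m n).
  move=> n; rewrite mulr_gt0 //; have /andP[_ b] := xm n; lra.
have [wp Hpy] := proj_main N0 e0 e1 c0 Hp.
split => //.
apply: le_trans (Hpy v Hv) _.
have [[w'1 w'K] _] := Hp.
have R1 : \sum_n m n * wt n * eta <= RE w' (fun n => wt n * (1 - eta * m n)).
  have : \sum_n (w' n - wt n * (1 - eta * m n)) <= RE w' (fun n => wt n * (1 - eta * m n)).
    rewrite /RE; apply: ler_sum => n _; have [b1 _] := w'K n.
    exact: (phi_ge (c0 n) b1).
  move=> H; apply: le_trans H; apply: eq_ler'; symmetry.
  rewrite sumrB w'1 (eq_bigr (fun n => wt n - eta * (m n * wt n))); last by move=> n _; ring.
  rewrite sumrB wt1 -big_distrr /= -big_distrl /=; ring.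
have R2 : RE v (fun n => wt n * (1 - eta * m n)) <=
          RE v wt + eta * (1 + eta * nu0) * \sum_n m n * v n.
  rewrite big_distrr /= /RE -big_split /=; apply: ler_sum => n _.
  have [b1 _] := (proj2 Hv) n; have /andP[xa xb] := xm n; have /andP[ma mb] := m0 n.
  have [->|vn] := eqVneq (v n) 0; first by rewrite mulr0 mulr0 addr0.
  have v0 : 0 < v n by rewrite lt_neqAle eq_sym vn b1.
  have x1 : 0 < 1 - eta * m n by lra.
  have -> : ln (v n / (wt n * (1 - eta * m n))) = ln (v n / wt n) - ln (1 - eta * m n).
    rewrite -ln_div ?posrE ?divr_gt0 //; congr ln; field.
    by apply/andP; split; rewrite gt_eqF.
  have L := ln1B_ge xa xb.
  have : - ln (1 - eta * m n) * v n <= (eta * m n + (eta * m n) ^+ 2) * v n.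
    by apply: ler_wpM2r => //; exact: ltW.
  have : (eta * m n + (eta * m n) ^+ 2) * v n <= eta * (1 + eta * nu0) * (m n * v n).
    have -> : (eta * m n + (eta * m n) ^+ 2) * v n = (eta * (1 + eta * m n)) * (m n * v n) by ring.
    apply: ler_wpM2r; first by rewrite mulr_ge0 // ltW.
    apply: ler_wpM2l; first exact: ltW.
    by rewrite lerD2l ler_wpM2l // ltW.
  lra.
have E : eta * \sum_n m n * wt n = \sum_n m n * wt n * eta by rewrite mulrC big_distrl.
lra.
Qed.


Lemma mw_bound (eps eta nu0 : R) T (w m : nat -> 'I_N -> R) (v : 'I_N -> R) :
 (0 < N)%N -> 0 <= eps -> eps < 1 -> 0 < eta -> eta * nu0 <= 2^-1 ->
 capped_simplex eps (w 1%N) -> (forall n, 0 < w 1%N n) ->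
 (forall t, (1 <= t <= T)%N -> forall n, 0 <= m t n <= nu0) ->
 (forall t, (1 <= t <= T)%N -> is_RE_proj eps (fun n => w t n * (1 - eta * m t n)) (w t.+1)) ->
 capped_simplex eps v ->
 (forall t, (1 <= t <= T.+1)%N -> capped_simplex eps (w t) /\ forall n, 0 < w t n) /\
 \sum_(1 <= t < T.+1) \sum_n m t n * w t n <=
   (1 + eta * nu0) * \sum_(1 <= t < T.+1) \sum_n m t n * v n + RE v (w 1%N) / eta.
Proof.
move=> N0 e0 e1 eta0 en w1K w1p mb Hp Hv.
have Inv : forall t, (1 <= t <= T.+1)%N -> capped_simplex eps (w t) /\ (forall n, 0 < w t n).
  elim=> [//|t IH] /andP[_ ht].
  have [->|t0] := eqVneq t 0%N; first by split.
  have ht' : (1 <= t <= T)%N by rewrite lt0n t0.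
  have [K P] : capped_simplex eps (w t) /\ (forall n, 0 < w t n).
    by apply: IH; rewrite lt0n t0 /= ltnW.
  split; first by case: (Hp t ht').
  by case: (one_step N0 e0 e1 eta0 en K P (mb t ht') (Hp t ht') Hv).
split => //.
have Cl : forall T', (T' <= T)%N ->
  eta * \sum_(1 <= t < T'.+1) \sum_n m t n * w t n + RE v (w T'.+1) <=
  RE v (w 1%N) + eta * (1 + eta * nu0) * \sum_(1 <= t < T'.+1) \sum_n m t n * v n.
  elim=> [_|T' IH hT]; first by rewrite !big_geq // !mulr0 add0r addr0.
  have ht : (1 <= T'.+1 <= T)%N by [].
  have [K P] := Inv T'.+1 (ltnW hT).
  have [_ S] := one_step N0 e0 e1 eta0 en K P (mb _ ht) (Hp _ ht) Hv.
  have IH' := IH (ltnW hT).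
  rewrite !(big_nat_recr T'.+1) //= !mulrDr.
  lra.
have [KT PT] := Inv T.+1 (leqnn _).
have R0 := RE_ge0 Hv KT PT.
have C := Cl T (leqnn _).
rewrite -(ler_pM2l eta0) mulrDr [X in _ + X]mulrC divfK ?gt_eqF // mulrA.
lra.
Qed.

End SF.

Set Implicit Arguments. Unset Strict Implicit.

Section SG.
Variable R : realType.

Lemma le_bigmax0 (I : finType) (F : I -> R) i : F i <= \big[Num.max/0]_j F j.
Proof.
have : i \in index_enum I by rewrite mem_index_enum.
elim: (index_enum I) => // a r IH; rewrite inE big_cons /= => /orP [/eqP <-|/IH h].
  by rewrite le_max lexx.
by rewrite le_max h orbT.
Qed.

Lemma bigmax0_ge0 (I : finType) (F : I -> R) : 0 <= \big[Num.max/0]_j F j.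
Proof.
by elim/big_rec: _ => // i x _ hx; rewrite le_max hx orbT.
Qed.

Lemma nu_ge0 N p (g : 'I_N -> 'cV[R]_p) : 0 <= nu g.
Proof. exact: bigmax0_ge0. Qed.

Lemma nu_ge N p (g : 'I_N -> 'cV[R]_p) i j : sqnorm (g i - g j) <= nu g.
Proof.
apply: le_trans (le_bigmax0 _ i).
exact: (le_bigmax0 (fun j => sqnorm (g i - g j)) j).
Qed.

Lemma sq_jensen N (lam x : 'I_N -> R) : (forall n, 0 <= lam n) -> \sum_n lam n = 1 ->
  (\sum_n lam n * x n) ^+ 2 <= \sum_n lam n * x n ^+ 2.
Proof.
move=> l0 l1; set c := \sum_n lam n * x n.
have : 0 <= \sum_n lam n * (x n - c) ^+ 2.
  by apply: sumr_ge0 => n _; rewrite mulr_ge0 // sqr_ge0.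
have -> : \sum_n lam n * (x n - c) ^+ 2 =
    \sum_n lam n * x n ^+ 2 - 2 * c * \sum_n lam n * x n + c ^+ 2 * \sum_n lam n.
  rewrite (eq_bigr (fun n => lam n * x n ^+ 2 - 2 * c * (lam n * x n) + c ^+ 2 * lam n)); last by move=> n _; ring.
  by rewrite big_split sumrB /= -!big_distrr.
rewrite l1 -/c; lra.
Qed.

Lemma sqnormE p (x : 'cV[R]_p) : sqnorm x = \sum_k x k 0 ^+ 2.
Proof. by rewrite /sqnorm mxE; apply: eq_bigr => k _; rewrite mxE expr2. Qed.

Lemma zvec_bound N p (g : 'I_N -> 'cV[R]_p) mu n : in_conv g mu ->
  sqnorm (zvec g mu n) <= nu g.
Proof.
move=> [lam [l0 [l1 ->]]].
have E : forall k, zvec g (\sum_j lam j *: g j) n k 0 = \sum_j lam j * (g n - g j) k 0.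
  move=> k; rewrite /zvec !mxE summxE.
  rewrite [RHS](eq_bigr (fun j => lam j * g n k 0 - lam j * g j k 0)); last first.
    by move=> j _; rewrite !mxE; ring.
  rewrite sumrB -big_distrl /= l1 mul1r; congr (_ - _).
  by apply: eq_bigr => j _; rewrite !mxE.
rewrite sqnormE.
apply: (@le_trans _ _ (\sum_k \sum_j lam j * ((g n - g j) k 0) ^+ 2)).
  by apply: ler_sum => k _; rewrite E; exact: sq_jensen.
rewrite exchange_big /=.
apply: (@le_trans _ _ (\sum_j lam j * nu g)); last by rewrite -big_distrl /= l1 mul1r.
apply: ler_sum => j _; rewrite -big_distrr /= ler_wpM2l //.
by rewrite -sqnormE nu_ge.
Qed.

End SG.

Unset Implicit Arguments.

Theorem mainTheorem5 (R : realType) (N p T : nat) (eps : R)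
  (g : 'I_N -> 'cV[R]_p) (mu : 'cV[R]_p) (eta_rho eta_w : R)
  (w : nat -> 'I_N -> R) :
  (1 <= N)%N -> (1 <= p)%N -> (1 <= T)%N -> 0 <= eps -> eps < 1 ->
  in_conv g mu ->
  capped_simplex eps (w 1%N) -> (forall n, 0 < w 1%N n) ->
  0 < eta_rho * nu g -> eta_rho * nu g <= 2^-1 ->
  0 < eta_w * nu g -> eta_w * nu g <= 2^-1 ->
  mwmmw_run g mu eps eta_rho eta_w T w ->
  (forall (v : 'I_N -> R) (rho : 'M[R]_p),
     capped_simplex eps v -> density rho ->
     \sum_(1 <= t < T.+1) frob (Smat g mu (w t)) rho <=
       (1 + eta_rho * nu g) * (1 + eta_w * nu g) *
         \sum_(1 <= t < T.+1) \sum_(n < N) lossvec g mu eta_rho w t n * v n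
       + (1 + eta_rho * nu g) * RE v (w 1%N) / eta_w
       + ln (p%:R) / eta_rho)
  /\
  ((forall n, w 1%N n = (N%:R)^-1) ->
   forall (v : 'I_N -> R) (rho : 'M[R]_p),
     capped_simplex eps v -> density rho ->
     \sum_(1 <= t < T.+1) frob (Smat g mu (w t)) rho <=
       (1 + eta_rho * nu g) * (1 + eta_w * nu g) *
         \sum_(1 <= t < T.+1) \sum_(n < N) lossvec g mu eta_rho w t n * v n
       + (1 + eta_rho * nu g) * ln ((1 - eps)^-1) / eta_w
       + ln (p%:R) / eta_rho).
Proof.
move=> N0 p0 T0 e0 e1 Hc Hw1 Hw1p Ha1 Ha2 Hb1 Hb2 Hrun.
have nu0 := nu_ge0 g.
have etar0 : 0 < eta_rho by nra.
have etaw0 : 0 < eta_w by nra.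
set m := fun t n => lossvec g mu eta_rho w t n.
have mb : forall t n, 0 <= m t n <= nu g.
  move=> t n.
  have [d [a [b Hs]]] := spec_ex (Xs_sym g mu eta_rho w t).
  have /andP[q1 q2] := quad_rho p0 (zvec g mu n) Hs.
  by rewrite /m /lossvec q1 /= (le_trans q2) // zvec_bound.
have Rel : forall t, frob (Smat g mu (w t)) (rhomat g mu eta_rho w t) = \sum_n m t n * w t n.
  by move=> t; rewrite frob_Smat; apply: eq_bigr => n _; rewrite mulrC.
have Part1 : forall (v : 'I_N -> R) (rho : 'M[R]_p),
     capped_simplex eps v -> density rho ->
     \sum_(1 <= t < T.+1) frob (Smat g mu (w t)) rho <=
       (1 + eta_rho * nu g) * (1 + eta_w * nu g) *
         \sum_(1 <= t < T.+1) \sum_(n < N) m t n * v n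
       + (1 + eta_rho * nu g) * RE v (w 1%N) / eta_w
       + ln (p%:R) / eta_rho.
  move=> v rho Hv Hrho.
  have [Inv MW] := mw_bound N0 e0 e1 etaw0 Hb2 Hw1 Hw1p (fun t _ => mb t)
                     (fun t ht => Hrun t ht) Hv.
  have M := mmw p0 g mu w T etar0 Hrho.
  rewrite [X in _ <= X + _](eq_bigr (fun t => \sum_n m t n * w t n)) in M; last by move=> t _; exact: Rel.
  set X := \sum_(1 <= t < T.+1) \sum_n m t n * w t n in M MW *.
  have X0 : 0 <= X.
    rewrite /X big_nat_cond; apply: sumr_ge0 => t /andP[/andP[h1 h2] _].
    have [_ P] := Inv t (andb_true_intro (conj h1 (ltnW h2))).
    by apply: sumr_ge0 => n _; rewrite mulr_ge0 //; [case/andP: (mb t n)| exact: ltW].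
  set Y := \sum_(1 <= t < T.+1) \sum_n m t n * v n in MW *.
  set a := eta_rho * nu g in Ha1 Ha2 *.
  set b := eta_w * nu g in Hb1 Hb2 MW *.
  have H1 : X <= (1 + a) * X by rewrite mulrDl mul1r lerDl mulr_ge0 // ltW.
  have H2 : (1 + a) * X <= (1 + a) * ((1 + b) * Y + RE v (w 1%N) / eta_w).
    by rewrite ler_wpM2l // addr_ge0 // ltW.
  have -> : (1 + a) * (1 + b) * Y + (1 + a) * RE v (w 1%N) / eta_w =
            (1 + a) * ((1 + b) * Y + RE v (w 1%N) / eta_w) by ring.
  lra.
split => [|Hu] v rho Hv Hrho; first exact: Part1.
apply: le_trans (Part1 v rho Hv Hrho) _.
rewrite lerD2r lerD2l.
apply: ler_wpM2r; first by rewrite invr_ge0 ltW.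
apply: ler_wpM2l; first by rewrite addr_ge0 // ltW.
have [v1 vK] := Hv.
have Nr : 0 < (N%:R : R) by rewrite ltr0n.
have e1' : 0 < 1 - eps by lra.
apply: (@le_trans _ _ (\sum_n v n * ln ((1 - eps)^-1))); last first.
  by rewrite -big_distrl /= v1 mul1r.
rewrite /RE; apply: ler_sum => n _; have [b1 b2] := vK n.
have [->|vn] := eqVneq (v n) 0; first by rewrite mul0r.
have v0 : 0 < v n by rewrite lt_neqAle eq_sym vn b1.
apply: ler_wpM2l => //.
rewrite Hu ler_ln ?posrE ?divr_gt0 ?invr_gt0 //.
rewrite invrK; have := ler_wpM2r (ltW Nr) b2.
by rewrite invfM mulfVK // gt_eqF.
Qed.
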